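(* Let $p$ be a prime, $\Phi:\mathbb{N}\to\mathbb{N}$ strictly increasing, and $f:\mathbb{Z}_p\to\mathbb{Z}_p$ continuous. Then $f\in\mathcal{F}(\Phi)$ if and only if $v_p(B(\Phi,f;m))\ge \tau(\Phi;m)$ for every nonnegative integer $m$.
   Context: $\mathbb{N}=\{0,1,2,\dots\}$. $v_p$, $|\cdot|_p$ are the $p$-adic valuation and absolute value ($v_p(p)=1$, $|p|_p=p^{-1}$). For a nonnegative integer $m$, $m_i$ denote its base-$p$ digits. Set $\Phi(-1):=-1$. $\tau(\Phi;m):=\min\{h\in\mathbb{N}: m<p^{1+\Phi(h)}\}$. For $m\ge p^{1+\Phi(0)}$, $M(m):=\sum_{i=\Phi(\tau(\Phi;m)-1)+1}^{\Phi(\tau(\Phi;m))} m_ip^i$. Define $B(\Phi,f;m):=f(m)$ if $m<p^{1+\Phi(0)}$ and $B(\Phi,f;m):=f(m)-f(m-M(m))$ otherwise (these are the unique coefficients with $f(x)=\sum_m B(\Phi,f;m)\chi(\Phi,m;x)$, where $\chi(\Phi,m;x)=1$ if $|x-m|_p\le p^{-1-\Phi(\tau(\Phi;m))}$ and $0$ otherwise). $\mathcal{F}(\Phi)$ is the class of continuous $f:\mathbb{Z}_p\to\mathbb{Z}_p$ such that for every positive integer $n$ and all $x,y\in\mathbb{Z}_p$: if $|x-y|_p\le p^{-1-\Phi(n-1)}$ then $|f(x)-f(y)|_p\le p^{-n}$. *)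

(* Defs.v *)
From mathcomp Require Import all_boot.
Set Implicit Arguments. Unset Strict Implicit. Unset Printing Implicit Defensive.

(* An element x of Z_p is given by its residues x mod p^n (n : nat),
   a coherent sequence: res (n+1) mod p^n = res n.  (This is the inverse
   limit Z_p = lim Z/p^n Z.) *)
Record Zp (p : nat) := MkZp {
  res : nat -> nat;
  res_compat : forall n, res n.+1 %% p ^ n = res n }.
Arguments res {p}.

Lemma dvdn_expS (p n : nat) : p ^ n %| p ^ n.+1.
Proof. by rewrite expnS dvdn_mull. Qed.

Definition Zp_of_nat_res (p m : nat) (n : nat) := m %% p ^ n.
Lemma Zp_of_nat_compat p m n :
  Zp_of_nat_res p m n.+1 %% p ^ n = Zp_of_nat_res p m n.
Proof. by rewrite /Zp_of_nat_res (modn_dvdm _ (dvdn_expS p n)). Qed.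
Definition Zp_of_nat (p m : nat) : Zp p := MkZp (@Zp_of_nat_compat p m).

Definition Zp_sub_res (p : nat) (x y : Zp p) (n : nat) :=
  if 0 < p then (res x n + (p ^ n - res y n)) %% p ^ n else 0.

Lemma res_lt p (x : Zp p) n : 0 < p -> res x n < p ^ n.
Proof. by move=> p0; rewrite -res_compat ltn_pmod // expn_gt0 p0. Qed.

Lemma Zp_sub_compat p (x y : Zp p) n :
  Zp_sub_res x y n.+1 %% p ^ n = Zp_sub_res x y n.
Proof.
rewrite /Zp_sub_res; case: ifP => p0; last by rewrite mod0n.
have dQP := dvdn_expS p n.
set P := p ^ n.+1 in dQP *; set Q := p ^ n in dQP *.
have Q0 : 0 < Q by rewrite expn_gt0 p0.
rewrite (modn_dvdm _ dQP).
rewrite -(res_compat x n) -(res_compat y n) -/Q.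
have lb : res y n.+1 <= P by apply: ltnW; apply: res_lt.
have lbq : res y n.+1 %% Q <= Q by apply: ltnW; rewrite ltn_pmod.
apply/eqP; rewrite -(eqn_modDr (res y n.+1)) -addnA subnK //.
rewrite -(modnDmr (res x n.+1 %% Q + (Q - res y n.+1 %% Q))) -addnA subnK //.
rewrite modnDr modn_mod.
have PQ : P %% Q = 0 by apply/eqP; rewrite -/(dvdn Q P).
by rewrite -modnDmr PQ addn0.
Qed.

Definition Zp_sub (p : nat) (x y : Zp p) : Zp p := MkZp (@Zp_sub_compat p x y).

(* v_p(x) >= k  <->  x in p^k Z_p  <->  residue of x mod p^k is 0
   (v_p(0) = +infinity, so 0 satisfies this for every k). *)
Definition vp_ge (p : nat) (x : Zp p) (k : nat) : Prop := res x k = 0.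

Definition padic_close (p : nat) (x y : Zp p) (k : nat) : Prop :=
  vp_ge (Zp_sub x y) k.

Definition Zp_continuous (p : nat) (f : Zp p -> Zp p) : Prop :=
  forall (x : Zp p) (n : nat), exists k : nat,
    forall y : Zp p, padic_close x y k -> padic_close (f x) (f y) n.

Definition digit (p m i : nat) : nat := (m %/ p ^ i) %% p.

(* 1 + Phi(h - 1), with the convention Phi(-1) = -1 *)
Definition onePhiPred (Phi : nat -> nat) (h : nat) : nat :=
  if h is h'.+1 then (Phi h').+1 else 0.

(* tau(Phi;m) = min { h in N : m < p^(1 + Phi h) }.
   Computed by a search over h = 0..m; when Phi is strictly increasing
   and p >= 2 the minimum exists and is <= m, so this is the true minimum. *)
Definition tau (p : nat) (Phi : nat -> nat) (m : nat) : nat :=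
  find (fun h => m < p ^ (Phi h).+1) (iota 0 m.+1).

Definition Mpart (p : nat) (Phi : nat -> nat) (m : nat) : nat :=
  \sum_(onePhiPred Phi (tau p Phi m) <= i < (Phi (tau p Phi m)).+1)
     digit p m i * p ^ i.

Definition Bcoef (p : nat) (Phi : nat -> nat) (f : Zp p -> Zp p) (m : nat)
  : Zp p :=
  if m < p ^ (Phi 0).+1 then f (Zp_of_nat p m)
  else Zp_sub (f (Zp_of_nat p m)) (f (Zp_of_nat p (m - Mpart p Phi m))).

Definition inF (p : nat) (Phi : nat -> nat) (f : Zp p -> Zp p) : Prop :=
  Zp_continuous f /\
  forall n : nat, 0 < n -> forall x y : Zp p,
    padic_close x y (Phi n.-1).+1 -> padic_close (f x) (f y) n.

(* Main.v *)
Require Import Defs.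
From mathcomp Require Import all_boot.
From mathcomp Require Import zify.
Set Implicit Arguments. Unset Strict Implicit.

Section Aux.
Variable p : nat.
Hypothesis p2 : 1 < p.

Lemma p0 : 0 < p. Proof. by apply: ltnW. Qed.

Lemma pexp_gt0 n : 0 < p ^ n. Proof. by rewrite expn_gt0 p0. Qed.

Lemma close_iff (x y : Zp p) k : padic_close x y k <-> res x k = res y k.
Proof.
rewrite /padic_close /vp_ge /= /Zp_sub_res p0.
have hx := res_lt x k p0; have hy := res_lt y k p0.
have hP := pexp_gt0 k.
set P := p ^ k in hx hy hP *.
set a := res x k in hx *; set b := res y k in hy *.
split=> [H|->]; last by rewrite subnKC ?modnn // ltnW.
have := divn_eq (a + (P - b)) P; rewrite H addn0.
move: (_ %/ _) => q E.
case: q E => [|[|q]] E; first lia; first lia.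
have : P * 2 <= P * q.+2 by rewrite leq_mul2l; apply/orP; right.
lia.
Qed.

Lemma res_mod (x : Zp p) n k : n <= k -> res x n = res x k %% p ^ n.
Proof.
elim: k => [|k IH]; first by rewrite leqn0 => /eqP ->; rewrite modn_small // res_lt // p0.
rewrite leq_eqVlt => /orP [/eqP ->|]; first by rewrite modn_small // res_lt // p0.
rewrite ltnS => nk; rewrite (IH nk) -(res_compat x k) modn_dvdm //.
by apply: dvdn_exp2l.
Qed.

Lemma modS m b : m %% p ^ b.+1 = m %% p ^ b + digit p m b * p ^ b.
Proof.
rewrite /digit modn_divl -expnS.
rewrite {1}(divn_eq (m %% p ^ b.+1) (p ^ b)) addnC.
by rewrite modn_dvdm // dvdn_exp2l.
Qed.

Lemma mod_mono m a b : a <= b -> m %% p ^ a <= m %% p ^ b.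
Proof.
elim: b => [|b IH]; first by rewrite leqn0 => /eqP ->.
rewrite leq_eqVlt => /orP [/eqP ->|] //.
rewrite ltnS => /IH H; rewrite modS; exact: leq_trans H (leq_addr _ _).
Qed.

Lemma sum_digits m a b : a <= b ->
  \sum_(a <= i < b) digit p m i * p ^ i = m %% p ^ b - m %% p ^ a.
Proof.
elim: b => [|b IH]; first by rewrite leqn0 => /eqP ->; rewrite big_geq // subnn.
rewrite leq_eqVlt => /orP [/eqP ->|]; first by rewrite big_geq // subnn.
rewrite ltnS => ab; rewrite big_nat_recr //= IH // modS.
have := @mod_mono m a b ab; have := modS m b; lia.
Qed.

Variable Phi : nat -> nat.
Hypothesis Phi_inc : forall n, Phi n < Phi n.+1.

Lemma Phi_mono i j : i <= j -> Phi i <= Phi j.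
Proof.
elim: j => [|j IH]; first by rewrite leqn0 => /eqP ->.
rewrite leq_eqVlt => /orP [/eqP ->|] //.
rewrite ltnS => /IH H; exact: leq_trans H (ltnW (Phi_inc j)).
Qed.

Lemma Phi_ge i : i <= Phi i.
Proof. elim: i => [|i IH] //; exact: leq_ltn_trans IH (Phi_inc i). Qed.

Lemma tau_spec m : m < p ^ (Phi (tau p Phi m)).+1 /\
  forall h, h < tau p Phi m -> p ^ (Phi h).+1 <= m.
Proof.
rewrite /tau; set P := fun h => m < p ^ (Phi h).+1.
have hP : has P (iota 0 m.+1).
  apply/hasP; exists m; first by rewrite mem_iota add0n ltnSn.
  rewrite /P; apply: (leq_trans (ltn_expl m p2)).
  apply: leq_pexp2l; [exact: p0 | exact: leq_trans (Phi_ge m) (leqnSn _)].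
have lt := hP; rewrite has_find size_iota in lt.
split.
  have := nth_find 0 hP; rewrite nth_iota //.
move=> h ht; have := before_find 0 ht; rewrite nth_iota //; last by lia.
by rewrite /P add0n => /negbT; rewrite -leqNgt.
Qed.

Lemma Mpart_eq m : p ^ (Phi 0).+1 <= m ->
  exists t', tau p Phi m = t'.+1 /\ p ^ (Phi t').+1 <= m /\
    m < p ^ (Phi t'.+1).+1 /\ m - Mpart p Phi m = m %% p ^ (Phi t').+1.
Proof.
move=> hm; have [h1 h2] := tau_spec m.
case E: (tau p Phi m) => [|t'] in h1 h2 *; first by rewrite ltnNge hm in h1.
have h3 := h2 t' (ltnSn _).
exists t'; split=> //; split=> //; split=> //.
rewrite /Mpart E /= sum_digits; last by rewrite ltnS ltnW.
rewrite (modn_small h1).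
have := leq_mod m (p ^ (Phi t').+1); lia.
Qed.

End Aux.

Theorem proposition2 (p : nat) (Phi : nat -> nat) (f : Zp p -> Zp p) :
  prime p ->
  (forall n : nat, Phi n < Phi n.+1) ->
  Zp_continuous f ->
  (inF Phi f <-> forall m : nat, vp_ge (Bcoef Phi f m) (tau p Phi m)).
Proof.
move=> pp Pinc fc; have p2 := prime_gt1 pp; have pg0 := p0 p2.
split.
- move=> [_ HF] m; rewrite /Bcoef; case: ifP => hm.
    have [_ h2] := tau_spec p2 Pinc m.
    case E: (tau p Phi m) => [|t'] in h2 *.
      by rewrite /vp_ge; have := res_lt (f (Zp_of_nat p m)) 0 pg0; rewrite expn0; case: (res _ 0).
    by have := h2 0 (ltn0Sn _); rewrite leqNgt hm.
  have hm0 : p ^ (Phi 0).+1 <= m by rewrite leqNgt hm.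
  have [t' [Et [h1 [h2 Em]]]] := Mpart_eq p2 Pinc hm0.
  rewrite Et Em; apply: (HF t'.+1 (ltn0Sn _)) => /=.
  by apply/close_iff => //=; rewrite /Zp_of_nat_res modn_mod.
- move=> H; split=> // n n0 x y hxy.
  set L := (Phi n.-1).+1 in hxy.
  have A : forall m, res (f (Zp_of_nat p m)) n = res (f (Zp_of_nat p (m %% p ^ L))) n.
    elim/ltn_ind => m IH.
    case: (ltnP m (p ^ L)) => hm; first by rewrite modn_small.
    have hm0 : p ^ (Phi 0).+1 <= m.
      apply: leq_trans hm; apply: leq_pexp2l => //.
      by rewrite ltnS; apply: (Phi_mono Pinc).
    have [t' [Et [h1 [h2 Em]]]] := Mpart_eq p2 Pinc hm0.
    have := H m; rewrite /Bcoef ltnNge hm0 /= Et Em => /(close_iff p2) C.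
    have nt : n <= t'.+1.
      case: (leqP n t'.+1) => // lt.
      have : p ^ (Phi t'.+1).+1 <= p ^ L.
        apply: leq_pexp2l => //; rewrite ltnS; apply: (Phi_mono Pinc); lia.
      lia.
    rewrite (res_mod p2 _ nt) C -(res_mod p2 _ nt).
    have lk : m %% p ^ (Phi t').+1 < m.
      exact: leq_trans (ltn_pmod _ (pexp_gt0 p2 _)) h1.
    rewrite IH // modn_dvdm //; apply: dvdn_exp2l; rewrite ltnS; apply: (Phi_mono Pinc); lia.
  have [K1 HK1] := fc x n; have [K2 HK2] := fc y n.
  set K := maxn (maxn K1 K2) L.
  have k1 : K1 <= K by rewrite /K; lia.
  have k2 : K2 <= K by rewrite /K; lia.
  have kL : L <= K by rewrite /K; lia.
  have cx : padic_close x (Zp_of_nat p (res x K)) K1.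
    by apply/close_iff => //=; rewrite /Zp_of_nat_res -res_mod.
  have cy : padic_close y (Zp_of_nat p (res y K)) K2.
    by apply/close_iff => //=; rewrite /Zp_of_nat_res -res_mod.
  have /(close_iff p2) ex := HK1 _ cx; have /(close_iff p2) ey := HK2 _ cy.
  apply/close_iff => //; rewrite ex ey A (A (res y K)) -!res_mod //.
  by move/(close_iff p2): hxy => ->.
Qed.
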